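(* Fix a round $r\ge 0$ and a block $k\in\{0,1,\dots,K\}$ of the algorithm described in the context, and let $w_{\max}=\max_{0\le t\le \tau_k^r-1} w_k^{r,t}$. Suppose Assumptions (A1)–(A3) hold. If $$\eta_k^r \le \frac{1}{2\,\tau_k^r\, L_k\, w_{\max}},$$ then, almost surely, $$\sum_{t=0}^{\tau_k^r-1} w_k^{r,t}\,\mathbb{E}^r\big[\|g_k^{r,t}-g_k^{r,0}\|^2\big] \le 8(\tau_k^r)^3(\eta_k^r)^2L_k^2\,w_{\max}^3\Big(\|\nabla_k F(\Theta^{r,0})\|^2+\sigma_k^2\Big)$$ and $$\sum_{t=0}^{\tau_k^r-1} (w_k^{r,t})^2\,\mathbb{E}^r\big[\|g_k^{r,t}-g_k^{r,0}\|^2\big] \le 8(\tau_k^r)^3(\eta_k^r)^2L_k^2\,w_{\max}^4\Big(\|\nabla_k F(\Theta^{r,0})\|^2+\sigma_k^2\Big).$$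
   Context: Setting. There are blocks $k=0,1,\dots,K$ (block $0$ is the server, blocks $1,\dots,K$ are parties). The global parameter is $\Theta=(\theta_0,\theta_1,\dots,\theta_K)\in\mathbb{R}^V$ with $\theta_k\in\mathbb{R}^{V_k}$, $V=\sum_k V_k$. There are $N$ data samples; for each $i\in\{1,\dots,N\}$ there is a differentiable loss $l_i:\mathbb{R}^V\to\mathbb{R}$ (in the application $l_i(\Theta)=l_i(\theta_0;h_1(\theta_1;x_1^i),\dots,h_K(\theta_K;x_K^i);y^i)$, but only the function of $\Theta$ matters). The objective is $F(\Theta)=\frac1N\sum_{i=1}^N l_i(\Theta)$, and $\nabla_kF$ denotes the partial gradient of $F$ with respect to the block $\theta_k$. For a mini-batch $\mathcal{B}\subseteq\{1,\dots,N\}$, the stochastic partial gradient is $g_k(\Theta;\mathcal{B})=\frac{1}{|\mathcal{B}|}\sum_{i\in\mathcal{B}}\nabla_{\theta_k}l_i(\Theta)$. Assumptions. (A1) Smoothness: there are constants $L<\infty$ and $L_k<\infty$ ($k=0,\dots,K$) such that for all $i$ and all $\Theta_1,\Theta_2\in\mathbb{R}^V$: $\|\nabla_\Theta l_i(\Theta_1)-\nabla_\Theta l_i(\Theta_2)\|\le L\|\Theta_1-\Theta_2\|$ and $\|\nabla_{\theta_k} l_i(\Theta_1)-\nabla_{\theta_k} l_i(\Theta_2)\|\le L_k\|\Theta_1-\Theta_2\|$. (A2) Unbiasedness: for a random mini-batch $\mathcal{B}$ (drawn as in the algorithm) and every fixed $\Theta$, $\mathbb{E}_{\mathcal{B}}[g_k(\Theta;\mathcal{B})]=\nabla_kF(\Theta)$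 for all $k$. (A3) Bounded variance: there are constants $\sigma_k<\infty$ such that for every fixed $\Theta$, $\mathbb{E}_{\mathcal{B}}\|\nabla_kF(\Theta)-g_k(\Theta;\mathcal{B})\|^2\le\sigma_k^2$. Algorithm (Flex-VFL). Given deterministic positive integers $\tau_k^r\ge1$ (number of local iterations of block $k$ in round $r$), step sizes $\eta_k^r>0$, and weights $w_k^{r,t}\ge 1$, and an initial $\Theta^{0,0}$. In each round $r=0,1,\dots$, a mini-batch $\mathcal{B}^r$ is drawn at random, independently of $\mathcal{B}^0,\dots,\mathcal{B}^{r-1}$ (so that (A2), (A3) hold for $\mathcal{B}^r$ conditionally on the past). Write $\Theta^{r,0}=(\theta_0^{r,0},\dots,\theta_K^{r,0})$. For each block $k$ and $t=0,\dots,\tau_k^r-1$: let $\Gamma_k^{r,t}\in\mathbb{R}^V$ be the vector whose block $k$ equals $\theta_k^{r,t}$ and whose block $j\neq k$ equals $\theta_j^{r,0}$; set $g_k^{r,t}=g_k(\Gamma_k^{r,t};\mathcal{B}^r)$ and $\theta_k^{r,t+1}=\theta_k^{r,t}-\eta_k^r\,w_k^{r,t}\,g_k^{r,t}$. Then $\Theta^{r+1,0}=(\theta_0^{r,\tau_0^r},\dots,\theta_K^{r,\tau_K^r})$. In particular $g_k^{r,0}=g_k(\Theta^{r,0};\mathcal{B}^r)$ and $\theta_k^{r,\tau_k^r}=\theta_k^{r,0}-\eta_k^r\sum_{t=0}^{\tau_k^r-1}w_k^{r,t}g_k^{r,t}$. Notation. $\mathbb{E}^r[\cdot]$ denotes expectation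 over the mini-batch $\mathcal{B}^r$ conditioned on $\Theta^{0,0},\Theta^{1,0},\dots,\Theta^{r,0}$. *)

(* Defs.v *)
From HB Require Import structures.
From mathcomp Require Import all_boot all_order all_algebra.
From mathcomp Require Import all_classical all_reals all_analysis.
Set Implicit Arguments. Unset Strict Implicit. Unset Printing Implicit Defensive.
Import Order.TTheory GRing.Theory Num.Theory.
Import numFieldNormedType.Exports.
Local Open Scope ring_scope.

(* Parameter vectors Theta live in R^n, represented as row vectors 'rV[R]_n.
   The coordinates are partitioned into K+1 blocks by blk : 'I_n -> 'I_K.+1
   (coordinate j belongs to block blk j). *)

Definition enorm (R : realType) (n : nat) (v : 'rV[R]_n) : R :=
  Num.sqrt (\sum_(j < n) v 0 j ^+ 2).

Definition grad (R : realType) (n : nat) (f : 'rV[R]_n -> R) (x : 'rV[R]_n)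
  : 'rV[R]_n := \row_(j < n) ('D_(delta_mx 0 j) f x).

Definition blockpart (R : realType) (n K : nat) (blk : 'I_n -> 'I_K.+1)
  (k : 'I_K.+1) (v : 'rV[R]_n) : 'rV[R]_n :=
  \row_(j < n) (if blk j == k then v 0 j else 0).

Definition pgrad (R : realType) (n K : nat) (blk : 'I_n -> 'I_K.+1)
  (k : 'I_K.+1) (f : 'rV[R]_n -> R) (x : 'rV[R]_n) : 'rV[R]_n :=
  blockpart blk k (grad f x).

Definition objF (R : realType) (n N : nat) (l : 'I_N -> 'rV[R]_n -> R)
  (x : 'rV[R]_n) : R := N%:R^-1 * \sum_(i < N) l i x.

Definition sgrad (R : realType) (n K N : nat) (blk : 'I_n -> 'I_K.+1)
  (k : 'I_K.+1) (l : 'I_N -> 'rV[R]_n -> R) (x : 'rV[R]_n) (B : {set 'I_N})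
  : 'rV[R]_n := #|B|%:R^-1 *: \sum_(i in B) pgrad blk k (l i) x.

(* Expectation over a random mini-batch with probability mass function p. *)
Definition Eb (R : realType) (N : nat) (p : {set 'I_N} -> R)
  (f : {set 'I_N} -> R) : R := \sum_(B : {set 'I_N}) p B * f B.

Definition Ebv (R : realType) (n N : nat) (p : {set 'I_N} -> R)
  (f : {set 'I_N} -> 'rV[R]_n) : 'rV[R]_n := \sum_(B : {set 'I_N}) p B *: f B.

(* Local iterates of block k within a round, for mini-batch B:
   Gamma t has block k equal to theta_k^{r,t} and every other block equal to
   theta_j^{r,0} (blocks j <> k are never changed by the update below). *)
Fixpoint Gam (R : realType) (n K N : nat) (blk : 'I_n -> 'I_K.+1)
  (k : 'I_K.+1) (l : 'I_N -> 'rV[R]_n -> R) (eta : R) (w : nat -> R)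
  (Theta0 : 'rV[R]_n) (B : {set 'I_N}) (t : nat) : 'rV[R]_n :=
  match t with
  | 0 => Theta0
  | t'.+1 => let G := Gam blk k l eta w Theta0 B t' in
             G - (eta * w t') *: sgrad blk k l G B
  end.

Definition wmax (R : realType) (tau : nat) (w : nat -> R) : R :=
  \big[Num.max/0]_(t < tau) w t.

(* Main.v *)
Require Import Defs.
From HB Require Import structures.
From mathcomp Require Import all_boot all_order all_algebra.
From mathcomp Require Import all_classical all_reals all_analysis.
From mathcomp Require Import ring lra.
Import Order.TTheory GRing.Theory Num.Theory.
Import numFieldNormedType.Exports.
Local Open Scope ring_scope.

Section N.
Variable R : realType.
Variable n : nat.
Implicit Types u v : 'rV[R]_n.

Definition S2 u := \sum_(j < n) u 0 j ^+ 2.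
Definition dotv u v := \sum_(j < n) u 0 j * v 0 j.

Lemma S2_ge0 u : 0 <= S2 u.
Proof. by apply: sumr_ge0 => j _; rewrite sqr_ge0. Qed.

Lemma CS u v : dotv u v ^+ 2 <= S2 u * S2 v.
Proof.
set a := fun j => u 0 j; set b := fun j => v 0 j.
have H : 0 <= \sum_(i < n) \sum_(j < n) (a i * b j - a j * b i) ^+ 2.
  by apply: sumr_ge0 => i _; apply: sumr_ge0 => j _; rewrite sqr_ge0.
have E1 : S2 u * S2 v = \sum_(i < n) \sum_(j < n) (a i ^+ 2 * b j ^+ 2).
  rewrite /S2 mulr_suml; apply: eq_bigr => i _; by rewrite mulr_sumr.
have E2 : S2 u * S2 v = \sum_(i < n) \sum_(j < n) (a j ^+ 2 * b i ^+ 2).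
  rewrite /S2 mulrC mulr_suml; apply: eq_bigr => i _; rewrite mulr_sumr.
  by apply: eq_bigr => j _; rewrite mulrC.
have E3 : dotv u v ^+ 2 = \sum_(i < n) \sum_(j < n) ((a i * b i) * (a j * b j)).
  rewrite /dotv expr2 mulr_suml; apply: eq_bigr => i _; by rewrite mulr_sumr.
have E : \sum_(i < n) \sum_(j < n) (a i * b j - a j * b i) ^+ 2 =
   S2 u * S2 v + S2 u * S2 v - 2 * dotv u v ^+ 2.
  rewrite {1}E1 {1}E2 E3 -big_split /= mulr_sumr -sumrB.
  apply: eq_bigr => i _; rewrite -big_split /= mulr_sumr -sumrB.
  apply: eq_bigr => j _; ring.
rewrite E in H; lra.
Qed.

Lemma enormE u : enorm u = Num.sqrt (S2 u).
Proof. by []. Qed.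

Lemma enorm_ge0 u : 0 <= enorm u.
Proof. exact: sqrtr_ge0. Qed.

Lemma enorm_sq u : enorm u ^+ 2 = S2 u.
Proof. by rewrite enormE sqr_sqrtr // S2_ge0. Qed.

Lemma dot_le u v : dotv u v <= enorm u * enorm v.
Proof.
have h : dotv u v ^+ 2 <= (enorm u * enorm v) ^+ 2.
  by rewrite exprMn !enorm_sq CS.
have := h; rewrite -ler_sqrt ?sqrtr_sqr ?sqr_ge0 //.
move=> h2; apply: (le_trans (ler_norm _)); apply: (le_trans h2).
by rewrite ger0_norm // mulr_ge0 // enorm_ge0.
Qed.

Lemma S2D u v : S2 (u + v) = S2 u + 2 * dotv u v + S2 v.
Proof.
rewrite /S2 /dotv mulr_sumr -!big_split /=; apply: eq_bigr => j _.
rewrite !mxE; ring.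
Qed.

Lemma enormD u v : enorm (u + v) <= enorm u + enorm v.
Proof.
have h : S2 (u + v) <= (enorm u + enorm v) ^+ 2.
  rewrite S2D sqrrD !enorm_sq; have := dot_le u v; lra.
rewrite enormE -(ger0_norm (addr_ge0 (enorm_ge0 u) (enorm_ge0 v))) -sqrtr_sqr.
by rewrite ler_sqrt // sqr_ge0.
Qed.

Lemma enormZ (a : R) u : enorm (a *: u) = `|a| * enorm u.
Proof.
rewrite !enormE.
have -> : S2 (a *: u) = a ^+ 2 * S2 u.
  rewrite /S2 mulr_sumr; apply: eq_bigr => j _; rewrite !mxE; ring.
by rewrite sqrtrM ?sqr_ge0 // sqrtr_sqr.
Qed.

Lemma enorm0 : enorm (0 : 'rV[R]_n) = 0.
Proof.
rewrite enormE /S2 big1 ?sqrtr0 // => j _; by rewrite mxE expr0n.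
Qed.

Lemma enormB u v : enorm (u - v) = enorm (v - u).
Proof. by rewrite -opprB -scaleN1r enormZ normrN normr1 mul1r. Qed.

Lemma enorm_sum (I : finType) (P : pred I) (f : I -> 'rV[R]_n) :
  enorm (\sum_(i | P i) f i) <= \sum_(i | P i) enorm (f i).
Proof.
elim/big_rec2: _ => [|i x y _ h]; first by rewrite enorm0.
by rewrite (le_trans (enormD _ _)) // lerD2l.
Qed.
End N.
Arguments enorm_sum {R n I}.
Arguments enormZ {R n}.
Arguments enormD {R n}.
Arguments enorm_ge0 {R n}.


Lemma wmax_ge (R : realType) tau (w : nat -> R) (i : nat) :
  (i < tau)%N -> w i <= wmax tau w.
Proof.
move=> hi; rewrite /wmax (bigD1 (Ordinal hi)) //=.
by rewrite le_max lexx.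
Qed.

Lemma wmax_ge0 (R : realType) tau (w : nat -> R) : 0 <= wmax tau w.
Proof.
rewrite /wmax; elim/big_rec: _ => // i x _ h.
by rewrite le_max h orbT.
Qed.

Lemma rec_bound (R : realType) (a : nat -> R) (c G : R) (tau : nat) :
  0 <= c -> 0 <= G -> (forall t, 0 <= a t) -> 2 * tau%:R * c <= 1 ->
  (forall t, (t <= tau)%N -> a t <= c * \sum_(s < t) (G + a s)) ->
  forall t, (t <= tau)%N -> a t <= 2 * c * t%:R * G.
Proof.
move=> c0 G0 a0 hc hrec.
suff H : forall t, (t <= tau)%N -> forall s, (s <= t)%N -> a s <= 2 * c * s%:R * G.
  by move=> t ht; exact: (H t ht t (leqnn t)).
elim=> [|t IH] ht s hs.
  move: hs; rewrite leqn0 => /eqP ->.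
  have := hrec 0%N ht; rewrite big_ord0 mulr0 => h.
  by rewrite mulr0 mul0r.
rewrite leq_eqVlt in hs; case/orP: hs => [/eqP ->|hs]; last first.
  by apply: IH => //; apply: ltnW.
have hsum : \sum_(s < t.+1) (G + a s) <= t.+1%:R * (G + 2 * c * t.+1%:R * G).
  have -> : t.+1%:R * (G + 2 * c * t.+1%:R * G) =
     \sum_(s < t.+1) (G + 2 * c * t.+1%:R * G).
    by rewrite sumr_const card_ord mulr_natl.
  apply: ler_sum => i _; rewrite lerD2l.
  have hi : (i <= t)%N by rewrite -ltnS.
  apply: (le_trans (IH (ltnW ht) i hi)).
  apply: ler_wpM2r => //; apply: ler_wpM2l; first by rewrite mulr_ge0.
  by rewrite ler_nat ltnW.
apply: (le_trans (hrec _ ht)).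
apply: (le_trans (ler_wpM2l c0 hsum)).
have ht' : t.+1%:R <= tau%:R :> R by rewrite ler_nat.
set T := t.+1%:R : R.
have T0 : 0 <= T by rewrite ler0n.
have h1 : 2 * c * T <= 1.
  apply: le_trans hc; rewrite -mulrA -[X in _ <= X]mulrA; apply: ler_wpM2l => //.
  by rewrite mulrC ler_wpM2r.
have : c * T * G * (2 * c * T) <= c * T * G * 1.
  by apply: ler_wpM2l => //; rewrite !mulr_ge0.
nra.
Qed.

Theorem lemma1 (R : realType) (n K N : nat) (blk : 'I_n -> 'I_K.+1)
  (l : 'I_N -> 'rV[R]_n -> R)
  (L : R) (Lb : 'I_K.+1 -> R) (sigma : 'I_K.+1 -> R)
  (p : {set 'I_N} -> R)
  (k : 'I_K.+1) (tau : nat) (eta : R) (w : nat -> R) (Theta0 : 'rV[R]_n) :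
  (* differentiable losses *)
  (forall i x, differentiable (l i) x) ->
  (* (A1) smoothness *)
  (forall i x y, enorm (grad (l i) x - grad (l i) y) <= L * enorm (x - y)) ->
  (forall i j x y, enorm (pgrad blk j (l i) x - pgrad blk j (l i) y)
                   <= Lb j * enorm (x - y)) ->
  (* the mini-batch distribution *)
  (forall B, 0 <= p B) -> \sum_(B : {set 'I_N}) p B = 1 ->
  (* (A2) unbiasedness *)
  (forall j x, Ebv p (fun B => sgrad blk j l x B) = pgrad blk j (objF l) x) ->
  (* (A3) bounded variance *)
  (forall j x, Eb p (fun B => enorm (pgrad blk j (objF l) x - sgrad blk j l x B) ^+ 2)
               <= sigma j ^+ 2) ->
  (* algorithm parameters *)
  (1 <= tau)%N -> 0 < eta -> (forall t, (t < tau)%N -> 1 <= w t) ->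
  (* step-size condition eta <= 1 / (2 tau L_k w_max) *)
  2 * tau%:R * Lb k * wmax tau w * eta <= 1 ->
  let gdiff t B := enorm (sgrad blk k l (Gam blk k l eta w Theta0 B t) B
                          - sgrad blk k l Theta0 B) ^+ 2 in
  let C := enorm (pgrad blk k (objF l) Theta0) ^+ 2 + sigma k ^+ 2 in
  \sum_(t < tau) w t * Eb p (gdiff t)
    <= 8 * tau%:R ^+ 3 * eta ^+ 2 * Lb k ^+ 2 * wmax tau w ^+ 3 * C
  /\
  \sum_(t < tau) w t ^+ 2 * Eb p (gdiff t)
    <= 8 * tau%:R ^+ 3 * eta ^+ 2 * Lb k ^+ 2 * wmax tau w ^+ 4 * C.
Proof.
move=> _ _ hLip p0 p1 _ hvar tau1 eta0 w1 hstep gdiff C.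
set M := Num.max (Lb k) 0.
have M0 : 0 <= M by rewrite le_max lexx orbT.
have LM : Lb k <= M by rewrite le_max lexx.
have hM2 : M ^+ 2 <= Lb k ^+ 2.
  case: (boolP (0 <= Lb k)) => h; first by rewrite /M max_l.
  have h' : Lb k <= 0 by rewrite ltW // ltNge h.
  by rewrite /M max_r // expr0n /= sqr_ge0.
set W := wmax tau w.
have W0 : 0 <= W by exact: wmax_ge0.
have wW : forall t, (t < tau)%N -> 0 <= w t /\ w t <= W.
  move=> t ht; split; last exact: wmax_ge.
  by apply: le_trans (w1 t ht).
have lipP : forall i x y, enorm (pgrad blk k (l i) x - pgrad blk k (l i) y)
    <= M * enorm (x - y).
  move=> i x y; apply: (le_trans (hLip i k x y)).
  by apply: ler_wpM2r => //; exact: enorm_ge0.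
have lipS : forall B x y, enorm (sgrad blk k l x B - sgrad blk k l y B)
    <= M * enorm (x - y).
  move=> B x y; rewrite /sgrad -scalerBr -sumrB enormZ.
  have hs := enorm_sum (fun i => i \in B)
    (fun i => pgrad blk k (l i) x - pgrad blk k (l i) y).
  have hs2 : \sum_(i in B) enorm (pgrad blk k (l i) x - pgrad blk k (l i) y)
      <= #|B|%:R * (M * enorm (x - y)).
    apply: (@le_trans _ _ (\sum_(i in B) M * enorm (x - y))).
      by apply: ler_sum => i _; exact: lipP.
    by rewrite sumr_const mulr_natl.
  have e0 : 0 <= M * enorm (x - y) by rewrite mulr_ge0 // enorm_ge0.
  rewrite ger0_norm ?invr_ge0 ?ler0n //.
  apply: (le_trans (ler_wpM2l _ hs)); first by rewrite invr_ge0 ler0n.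
  apply: (le_trans (ler_wpM2l _ hs2)); first by rewrite invr_ge0 ler0n.
  case: (eqVneq #|B| 0%N) => hB.
    by rewrite hB invr0 mul0r.
  by rewrite mulKf // pnatr_eq0.
have hGam : forall B t, Gam blk k l eta w Theta0 B t =
    Theta0 - \sum_(s < t) (eta * w s) *: sgrad blk k l (Gam blk k l eta w Theta0 B s) B.
  move=> B; elim=> [|t IH]; first by rewrite big_ord0 subr0.
  by rewrite /= IH big_ord_recr /= opprD addrA -IH.
set c := M * eta * W.
have c0 : 0 <= c by rewrite /c !mulr_ge0 // ltW.
have hc : 2 * tau%:R * c <= 1.
  move: hstep; rewrite /c /M; case: (boolP (0 <= Lb k)) => h.
    rewrite max_l // => hs; apply: le_trans hs; rewrite le_eqVlt; apply/orP; left.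
    by apply/eqP; rewrite /W; ring.
  have h' : Lb k <= 0 by rewrite ltW // ltNge h.
  by rewrite max_r // !mul0r mulr0.
set G := fun B => enorm (sgrad blk k l Theta0 B).
have perB : forall B t, (t < tau)%N ->
    gdiff t B <= 4 * c ^+ 2 * tau%:R ^+ 2 * G B ^+ 2.
  move=> B t ht.
  set a := fun t => enorm (sgrad blk k l (Gam blk k l eta w Theta0 B t) B
                          - sgrad blk k l Theta0 B).
  have G0 : 0 <= G B by exact: enorm_ge0.
  have hrec : forall t, (t <= tau)%N -> a t <= c * \sum_(s < t) (G B + a s).
    move=> t' ht'.
    apply: (le_trans (lipS B _ _)).
    rewrite hGam addrAC subrr add0r -scaleN1r enormZ normrN normr1 mul1r.
    have -> : c * \sum_(s < t') (G B + a s) = M * \sum_(s < t') (eta * W * (G B + a s)).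
      by rewrite -mulr_sumr /c -!mulrA.
    apply: ler_wpM2l => //.
    apply: (le_trans (enorm_sum _ _)); apply: ler_sum => s _.
    have hs : (s < tau)%N by apply: leq_trans ht'.
    have [ws0 wsW] := wW s hs.
    rewrite enormZ (ger0_norm (mulr_ge0 (ltW eta0) ws0)).
    have hg : enorm (sgrad blk k l (Gam blk k l eta w Theta0 B s) B) <= G B + a s.
      rewrite /G /a; set g := sgrad _ _ _ _ _; set g0 := sgrad _ _ _ Theta0 _.
      by rewrite -{1}(subrK g0 g) addrC enormD.
    apply: (le_trans (ler_wpM2l _ hg)); first by rewrite mulr_ge0 // ltW.
    apply: ler_wpM2r; first by rewrite addr_ge0 // enorm_ge0.
    by apply: ler_wpM2l => //; rewrite ltW.
  have hb := @rec_bound R a c (G B) tau c0 G0 (fun t => enorm_ge0 _) hc hrec t (ltnW ht).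
  have hT : t%:R <= tau%:R :> R by rewrite ler_nat ltnW.
  have hb2 : a t <= 2 * c * tau%:R * G B.
    apply: (le_trans hb); apply: ler_wpM2r => //; apply: ler_wpM2l => //.
    by rewrite mulr_ge0.
  have a0 : 0 <= a t by exact: enorm_ge0.
  rewrite /gdiff -/(a t).
  have -> : 4 * c ^+ 2 * tau%:R ^+ 2 * G B ^+ 2 = (2 * c * tau%:R * G B) ^+ 2 by ring.
  by rewrite ler_pXn2r // ?nnegrE // (le_trans a0 hb2).
set D := 8 * c ^+ 2 * tau%:R ^+ 2 * C.
have hE : forall t, (t < tau)%N -> Eb p (gdiff t) <= D.
  move=> t ht; rewrite /Eb.
  set Kc := 4 * c ^+ 2 * tau%:R ^+ 2.
  have K0 : 0 <= Kc by rewrite /Kc; apply: mulr_ge0; [apply: mulr_ge0; [exact: ler0n | exact: sqr_ge0] | exact: sqr_ge0].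
  set nF := enorm (pgrad blk k (objF l) Theta0).
  set v := fun B => enorm (pgrad blk k (objF l) Theta0 - sgrad blk k l Theta0 B) ^+ 2.
  have hG : forall B, G B ^+ 2 <= 2 * nF ^+ 2 + 2 * v B.
    move=> B; rewrite /G /v /nF.
    set g0 := sgrad _ _ _ _ _; set gF := pgrad _ _ _ _.
    have h : enorm g0 <= enorm gF + enorm (gF - g0).
      have e : g0 = gF + (- (gF - g0)) by rewrite opprB addrC subrK.
      rewrite {1}e; apply: le_trans (enormD _ _) _.
      by rewrite -scaleN1r enormZ normrN normr1 mul1r.
    have := enorm_ge0 g0; have := enorm_ge0 gF; have := enorm_ge0 (gF - g0).
    move=> hb ha hx.
    have h2 : enorm g0 ^+ 2 <= (enorm gF + enorm (gF - g0)) ^+ 2.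
      by rewrite ler_pXn2r // nnegrE // addr_ge0.
    have := sqr_ge0 (enorm gF - enorm (gF - g0)).
    nra.
  apply: (@le_trans _ _ (\sum_B p B * (Kc * (2 * nF ^+ 2 + 2 * v B)))).
    apply: ler_sum => B _; apply: ler_wpM2l => //.
    apply: (le_trans (perB B t ht)); apply: ler_wpM2l => //; exact: hG.
  have -> : \sum_B p B * (Kc * (2 * nF ^+ 2 + 2 * v B)) =
     2 * Kc * nF ^+ 2 * (\sum_B p B) + 2 * Kc * (\sum_B p B * v B).
    rewrite !mulr_sumr -big_split /=; apply: eq_bigr => B _; ring.
  rewrite p1 mulr1.
  have hv := hvar k Theta0; rewrite /Eb -/v in hv.
  rewrite /D /C -/nF; have : 0 <= 2 * Kc by rewrite mulr_ge0.
  rewrite /Kc => h2; nra.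
have C0 : 0 <= C by rewrite /C addr_ge0 ?sqr_ge0.
have D0 : 0 <= D.
  rewrite /D; apply: mulr_ge0 => //; apply: mulr_ge0; last exact: sqr_ge0.
  apply: mulr_ge0; [exact: ler0n | exact: sqr_ge0].
have eqD : forall m, tau%:R * (W ^+ m * D) =
    8 * tau%:R ^+ 3 * eta ^+ 2 * M ^+ 2 * W ^+ m.+2 * C.
  by move=> m; rewrite /D /c !exprS; ring.
have fin : forall m, 8 * tau%:R ^+ 3 * eta ^+ 2 * M ^+ 2 * W ^+ m * C <=
    8 * tau%:R ^+ 3 * eta ^+ 2 * Lb k ^+ 2 * W ^+ m * C.
  move=> m; apply: ler_wpM2r => //; apply: ler_wpM2r; first exact: exprn_ge0.
  by apply: ler_wpM2l => //; rewrite !mulr_ge0 // ?exprn_ge0 // ltW.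
split.
  apply: le_trans (fin 3%N); rewrite -eqD.
  apply: (@le_trans _ _ (\sum_(t < tau) W ^+ 1 * D)); last first.
    by rewrite sumr_const card_ord mulr_natl.
  apply: ler_sum => t _; have [h1 h2] := wW t (ltn_ord t).
  rewrite expr1; apply: (le_trans (ler_wpM2l h1 (hE t (ltn_ord t)))).
  exact: ler_wpM2r.
apply: le_trans (fin 4%N); rewrite -eqD.
apply: (@le_trans _ _ (\sum_(t < tau) W ^+ 2 * D)); last first.
  by rewrite sumr_const card_ord mulr_natl.
apply: ler_sum => t _; have [h1 h2] := wW t (ltn_ord t).
apply: (le_trans (ler_wpM2l (exprn_ge0 2 h1) (hE t (ltn_ord t)))).
apply: ler_wpM2r => //; rewrite ler_pXn2r // nnegrE.
Qed.
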